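(* Let $p$ be the characteristic of $\mathbb{F}_q$, $t\ge1$, $m=p^t$, and let $v_1,v_2\in\mathcal{R}=\mathbb{F}_q[x]/(x^{p^t}-1)$ with $\gcd(v_1v_2-1,x^{p^t}-1)=1$. Let $r_1,r_2$ be integers with $0<r_1<r_2<\frac{p^t-1}{2}$, and let $\mathcal{C}$ be the QC code of length $2p^t$ generated by $((x-1)^{r_1},v_1(x-1)^{r_1})$ and $(v_2(x-1)^{r_2},(x-1)^{r_2})$. Then $\mathcal{C}^{\perp_E}$ is the QC code generated by $((x-1)^{p^t-r_1},-\overline{v_2}(x-1)^{p^t-r_1})$ and $(-\overline{v_1}(x-1)^{p^t-r_2},(x-1)^{p^t-r_2})$, and $\mathcal{C}^{\perp_E}\subseteq\mathcal{C}$.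
   Context: Elements of $\mathcal{R}$ are identified with representatives of degree $<m$; $[k]=(k_0,\dots,k_{m-1})$; $\overline{k}(x)=k(x^{-1})\bmod(x^m-1)$. The QC code generated by $(u_{i1},u_{i2})$, $i=1,2$, is $\{([r_1u_{11}+r_2u_{21}],[r_1u_{12}+r_2u_{22}]):r_i\in\mathcal{R}\}\subseteq\mathbb{F}_q^{2m}$. $\mathcal{C}^{\perp_E}$ is the dual with respect to $\langle u,v\rangle_E=\sum u_iv_i$. *)

(* Defs.v *)
From HB Require Import structures.
From mathcomp Require Import all_boot all_order all_algebra all_field.
Set Implicit Arguments. Unset Strict Implicit. Unset Printing Implicit Defensive.
Import GRing.Theory.
Local Open Scope ring_scope.

Section QC.
Variable F : fieldType.
Variable m : nat.

Definition modR : {poly F} := 'X^m - 1.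

(* [k] = (k_0, ..., k_{m-1}), coefficients of the representative of degree < m *)
Definition vecR (k : {poly F}) : 'rV[F]_m :=
  \row_(i < m) (k %% modR)`_i.

(* \overline{k}(x) = k(x^{-1}) mod (x^m - 1); in R, x^{-1} = x^{m-1} *)
Definition conjR (k : {poly F}) : {poly F} :=
  (k \Po 'X^(m.-1)) %% modR.

Definition qc_code (u11 u12 u21 u22 : {poly F}) (w : 'rV[F]_(m + m)) : Prop :=
  exists r1 r2 : {poly F},
    w = row_mx (vecR (r1 * u11 + r2 * u21)) (vecR (r1 * u12 + r2 * u22)).

Definition eucl_ip (u v : 'rV[F]_(m + m)) : F := \sum_(i < m + m) u 0 i * v 0 i.

Definition eucl_dual (C : 'rV[F]_(m + m) -> Prop) (w : 'rV[F]_(m + m)) : Prop :=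
  forall c, C c -> eucl_ip w c = 0.

End QC.

(* Main.v *)
Require Import Defs.
From HB Require Import structures.
From mathcomp Require Import all_boot all_order all_algebra all_field.
From mathcomp Require Import ring lra zify.
Set Implicit Arguments. Unset Strict Implicit. Unset Printing Implicit Defensive.
Import GRing.Theory.
Local Open Scope ring_scope.

Section Aux.
Variable F : fieldType.
Variable m : nat.
Hypothesis hm : (1 < m)%N.

Local Notation M := (modR F m).

Lemma size_M : size M = m.+1.
Proof. by rewrite /modR -polyC1 size_XnsubC // ltnW. Qed.

Lemma monic_M : M \is monic.
Proof. by rewrite /modR -polyC1 monicXnsubC // ltnW. Qed.

Lemma mkM : mk_monic M = M.
Proof. by rewrite /mk_monic size_M monic_M ltnS (ltnW hm). Qed.

Local Notation psi := (in_qpoly M : {rmorphism {poly F} -> {poly %/ M}}).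

Lemma modE a : a %% M = (psi a : {poly F}).
Proof. by rewrite /= mkM (Pdiv.IdomainMonic.modpE monic_M). Qed.

Lemma psi_eq a b : psi a = psi b <-> a %% M = b %% M.
Proof. by rewrite !modE; split=> [->//|h]; apply: val_inj. Qed.

Lemma psi_mod a : psi (a %% M) = psi a.
Proof. by apply/psi_eq; rewrite modp_id. Qed.

Lemma psi_M : psi M = 0.
Proof. by apply: val_inj => /=; rewrite mkM -(Pdiv.IdomainMonic.modpE monic_M) modpp. Qed.

Lemma psi_Xm : psi 'X ^+ m = 1.
Proof.
rewrite -rmorphXn -[('X^m)](subrK 1) rmorphD /=.
by rewrite [in_qpoly _ (_ - _)]psi_M add0r rmorph1.
Qed.

Lemma psi_mulM x : psi (x * M) = 0.
Proof. by rewrite -(rmorph0 psi); apply/psi_eq; rewrite modp_mull mod0p. Qed.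

Lemma vecRE a : vecR m a = \row_i (psi a : {poly F})`_i.
Proof. by apply/rowP=> i; rewrite !mxE modE. Qed.


Lemma shift1 (q : {poly F}) i : (size q <= m)%N -> (i < m)%N ->
  ((q * 'X) %% M)`_((i.+1) %% m) = q`_i.
Proof.
move=> sq im.
set c := q`_m.-1.
set r := \poly_(k < m) (if k == 0%N then c else q`_k.-1).
have E : q * 'X = c%:P * M + r.
  apply/polyP=> k; rewrite coefMX coefD coefCM coef_poly /modR coefB coefXn coefC.
  have [->|k0] := eqVneq k 0%N.
    by rewrite /= eq_sym (gtn_eqF (ltnW hm)) (ltnW hm) sub0r mulrN1 addNr.
  rewrite /=; case: ltnP => km.
    by rewrite (ltn_eqF km) subr0 mulr0 add0r.
  rewrite subr0 addr0; have [->|kne] := eqVneq k m; first by rewrite mulr1.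
  rewrite mulr0; apply: nth_default; apply: leq_trans sq _.
  by move: km kne; case: k k0 => // k _ /=; lia.
rewrite E modp_addl_mul_small; last by rewrite size_M ltnS size_poly.
rewrite coef_poly ltn_mod (ltnW hm) /=.
have [im1|] := ltnP i.+1 m; first by rewrite modn_small.
move=> mi; have ei : i.+1 = m by apply/eqP; rewrite eqn_leq im mi.
by rewrite ei modnn /c -ei.
Qed.

Lemma shiftn (a : {poly F}) s i : (i < m)%N ->
  ((a * 'X^s) %% M)`_((i + s) %% m) = (a %% M)`_i.
Proof.
move=> im; elim: s => [|s IH]; first by rewrite expr0 mulr1 addn0 modn_small.
have -> : ((i + s.+1) %% m = ((i + s) %% m).+1 %% m)%N.
  by rewrite addnS -[in RHS]addn1 modnDml addn1.
rewrite exprSr mulrA.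
have -> : (a * 'X^s * 'X) %% M = ((a * 'X^s) %% M * 'X) %% M.
  by rewrite [in RHS]mulrC modp_mul mulrC.
rewrite shift1 //; last by rewrite ltn_mod (ltnW hm).
by rewrite -ltnS -size_M ltn_modp -size_poly_gt0 size_M.
Qed.


Local Notation Y := ('X^(m.-1) : {poly F}).
Definition cj (a : {poly F}) := psi (a \Po Y).

Lemma cjD a b : cj (a + b) = cj a + cj b.
Proof. by rewrite /cj comp_polyD rmorphD. Qed.
Lemma cjN a : cj (- a) = - cj a.
Proof. by rewrite /cj raddfN rmorphN. Qed.
Lemma cjB a b : cj (a - b) = cj a - cj b.
Proof. by rewrite cjD cjN. Qed.
Lemma cjM a b : cj (a * b) = cj a * cj b.
Proof. by rewrite /cj comp_polyM rmorphM. Qed.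
Lemma cjC c : cj c%:P = psi c%:P.
Proof. by rewrite /cj comp_polyC. Qed.
Lemma cj1 : cj 1 = 1.
Proof. by rewrite -polyC1 cjC polyC1 rmorph1. Qed.
Lemma cjXn a n : cj (a ^+ n) = cj a ^+ n.
Proof. by elim: n => [|n IH]; rewrite ?expr0 ?cj1 // !exprS cjM IH. Qed.
Lemma cjX : cj 'X = psi 'X ^+ m.-1.
Proof. by rewrite /cj comp_polyX rmorphXn. Qed.
Lemma cjM0 : cj M = 0.
Proof.
rewrite /modR cjB cjXn cjX cj1 -exprM mulnC exprM psi_Xm expr1n.
by rewrite subrr.
Qed.
Lemma cj_mod (a : {poly F}) : cj (a %% M) = cj a.
Proof. by rewrite [in RHS](divp_eq a M) cjD cjM cjM0 mulr0 add0r. Qed.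
Lemma cjE a : psi (conjR m a) = cj a.
Proof. by rewrite /conjR psi_mod. Qed.

Lemma size_modM (a : {poly F}) : (size (a %% M)%R <= m)%N.
Proof. by rewrite -ltnS -size_M ltn_modp -size_poly_gt0 size_M. Qed.

Lemma ipE (a b : {poly F}) : \sum_(i < m) (a %% M)`_i * (b %% M)`_i = ((a * conjR m b) %% M)`_0.
Proof.
set B := b %% M.
have BE : B = \sum_(j < m) B`_j *: 'X^j.
  rewrite -poly_def; apply/polyP => k; rewrite coef_poly; case: ltnP => // km.
  by rewrite nth_default // (leq_trans (size_modM b) km).
have -> : (a * conjR m b) %% M = (a * \sum_(j < m) B`_j *: 'X^(m.-1 * j)) %% M.
  apply/psi_eq; rewrite !rmorphM /= cjE -cj_mod -/B /cj; congr (_ * psi _).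
  rewrite {1}BE linear_sum; apply: eq_bigr => j _ /=.
  by rewrite linearZ /= rmorphXn /= comp_polyX -exprM.
rewrite mulr_sumr (big_morph (fun x => x %% M) (modpD M) (mod0p M)) coef_sum.
apply: eq_bigr => j _; rewrite -scalerAr modpZl coefZ mulrC; congr (_ * _).
have e : (0 = (j + m.-1 * j) %% m)%N.
  by rewrite -mulSn prednK ?(ltnW hm) // modnMr.
by rewrite {1}e shiftn.
Qed.


Lemma nondeg (E : {poly F}) :
  (forall k, (k < m)%N -> ((E * 'X^(m.-1 * k)) %% M)`_0 = 0) -> E %% M = 0.
Proof.
move=> h; apply/polyP => k; rewrite coef0; case: (ltnP k m) => km.
  have e : ((k + m.-1 * k) %% m = 0)%N.
    by rewrite -mulSn prednK ?(ltnW hm) // modnMr.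
  by rewrite -(shiftn E (m.-1 * k) km) e h.
by rewrite nth_default // (leq_trans (size_modM E) km).
Qed.

Lemma ip_row (x1 x2 y1 y2 : 'rV[F]_m) :
  eucl_ip (row_mx x1 x2) (row_mx y1 y2) =
  \sum_(i < m) x1 0 i * y1 0 i + \sum_(i < m) x2 0 i * y2 0 i.
Proof.
rewrite /eucl_ip big_split_ord /=; congr (_ + _); apply: eq_bigr => i _.
  by rewrite !row_mxEl.
by rewrite !row_mxEr.
Qed.

Lemma ipvec (a1 a2 b1 b2 : {poly F}) :
  eucl_ip (row_mx (vecR m a1) (vecR m a2)) (row_mx (vecR m b1) (vecR m b2)) =
  ((a1 * conjR m b1 + a2 * conjR m b2) %% M)`_0.
Proof.
rewrite ip_row; under eq_bigr do rewrite !mxE.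
under [X in _ + X]eq_bigr do rewrite !mxE.
by rewrite !ipE modpD coefD.
Qed.

Lemma vecR_rV (x : 'rV[F]_m) : vecR m (rVpoly x) = x.
Proof.
apply/rowP => i; rewrite mxE modp_small ?coef_rVpoly_ord //.
by rewrite size_M ltnS size_poly.
Qed.

Lemma vecR_psi (a b : {poly F}) : psi a = psi b -> vecR m a = vecR m b.
Proof. by rewrite !vecRE => ->. Qed.


Lemma alg_inv (R : comRingType) (A1 A2 k1 k2 S P Q : R) :
  S * (1 - k1 * k2) = 1 -> A1 + A2 * k1 = P -> A1 * k2 + A2 = Q ->
  A1 = S * P - S * k1 * Q /\ A2 = S * Q - S * k2 * P.
Proof.
move=> hS hP hQ; rewrite -hP -hQ; split.
  by rewrite -[A1 in LHS]mul1r -hS; ring.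
by rewrite -[A2 in LHS]mul1r -hS; ring.
Qed.

Local Notation U := (psi ('X - 1)).
Local Notation cu := (cj ('X - 1)).

Lemma XsubC_neq0 : ('X - 1 : {poly F}) != 0.
Proof. by rewrite -polyC1 monic_neq0 // monicXsubC. Qed.

Lemma psiX_unit : (- psi 'X ^+ m.-1) * (- psi 'X) = 1.
Proof. by rewrite mulrNN -exprSr prednK ?(ltnW hm) // psi_Xm. Qed.

Lemma cuE : cu = - psi 'X ^+ m.-1 * U.
Proof.
rewrite cjB cjX cj1 rmorphB rmorph1 mulrBr mulr1 mulNr -exprSr prednK ?(ltnW hm) //.
by rewrite psi_Xm opprK addrC.
Qed.

Lemma cu_cancel (A : {poly %/ M}) r : A * cu ^+ r = 0 -> A * U ^+ r = 0.
Proof.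
move=> h; have e : U ^+ r = cu ^+ r * (- psi 'X) ^+ r.
  by rewrite -exprMn cuE mulrAC psiX_unit mul1r.
by rewrite e mulrA h mul0r.
Qed.

Hypothesis hu : ('X - 1 : {poly F}) ^+ m = M.

Lemma Um : U ^+ m = 0.
Proof.
rewrite -rmorphXn -(rmorph0 psi); apply/psi_eq.
by rewrite hu modpp mod0p.
Qed.

Lemma Zr r : (r <= m)%N -> U ^+ (m - r) * cu ^+ r = 0.
Proof.
move=> rm; rewrite cuE exprMn mulrC -mulrA -exprD addnC subnK //.
by rewrite Um mulr0.
Qed.

Lemma divU (a : {poly F}) r : (r <= m)%N -> psi a * U ^+ r = 0 ->
  exists c : {poly F}, psi a = psi c * U ^+ (m - r).
Proof.
move=> rm h.
have h1 : (a * ('X - 1) ^+ r) %% M = 0.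
  by rewrite modE rmorphM rmorphXn h.
have : ('X - 1) ^+ (m - r) * ('X - 1) ^+ r %| a * ('X - 1) ^+ r.
  by rewrite -exprD subnK // hu; apply/modp_eq0P.
rewrite dvdp_mul2r ?expf_neq0 ?XsubC_neq0 // => hd.
by exists (a %/ ('X - 1) ^+ (m - r)); rewrite -rmorphXn -rmorphM divpK.
Qed.

Variables v1 v2 : {poly F}.
Hypothesis hcop : coprimep (v1 * v2 - 1) M.

Lemma bez : exists z w : {poly F}, z * (v1 * v2 - 1) + w * M = 1.
Proof.
have [[u1 u2] /= /eqpP [[c1 c2] /= /andP [c10 c20] hc]] := Bezout_coprimepP _ _ hcop.
exists ((c2^-1 * c1) *: u1), ((c2^-1 * c1) *: u2).
rewrite -!scalerAl -scalerDr -scalerA hc scalerA mulVf // scale1r //.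
Qed.

Lemma inv_psi : exists y : {poly F}, psi y * (1 - psi v1 * psi v2) = 1.
Proof.
have [z [w h]] := bez; exists (- z).
have := congr1 psi h; rewrite rmorphD psi_mulM addr0 !rmorphM rmorph1 rmorphB rmorph1 rmorphM => e.
by rewrite -[RHS]e rmorphN mulNr -mulrN opprB.
Qed.

Lemma inv_cj : exists s : {poly F}, psi s * (1 - cj v1 * cj v2) = 1.
Proof.
have [z [w h]] := bez; exists (- conjR m z).
have := congr1 cj h; rewrite cjD !cjM cjM0 mulr0 addr0 cj1 cjB cj1 cjM => e.
by rewrite -[RHS]e rmorphN cjE mulNr -mulrN opprB.
Qed.


Variables r1 r2 : nat.
Hypothesis hr1 : (0 < r1)%N.
Hypothesis hr12 : (r1 < r2)%N.
Hypothesis hr2 : (2 * r2 < m - 1)%N.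

Local Notation u := ('X - 1 : {poly F}).

Lemma DtoDual (c1 c2 s1 s2 : {poly F}) :
  psi ((c1 * u ^+ (m - r1) + c2 * (- conjR m v1 * u ^+ (m - r2))) *
        conjR m (s1 * u ^+ r1 + s2 * (v2 * u ^+ r2)) +
       (c1 * (- conjR m v2 * u ^+ (m - r1)) + c2 * u ^+ (m - r2)) *
        conjR m (s1 * (v1 * u ^+ r1) + s2 * u ^+ r2)) = 0.
Proof.
have Za : U ^+ (m - r1) * cu ^+ r1 = 0 by apply: Zr; lia.
have Zb : U ^+ (m - r2) * cu ^+ r2 = 0 by apply: Zr; lia.
move: Za Zb; set w := ('X - 1 : {poly F}); clearbody w => Za Zb.
rewrite !(rmorphD, rmorphM, rmorphN, rmorphXn, cjE, cjD, cjM, cjXn, cjN).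
transitivity (psi c1 * cj s1 * (1 - cj v1 * cj v2) * (psi w ^+ (m - r1) * cj w ^+ r1)
  + psi c2 * cj s2 * (1 - cj v1 * cj v2) * (psi w ^+ (m - r2) * cj w ^+ r2)).
  ring.
by rewrite Za Zb !mulr0 addr0.
Qed.

Lemma DualtoD (a1 a2 : {poly F}) :
 (forall k, (k < m)%N -> ((a1 * conjR m ('X^k * u ^+ r1 + 0 * (v2 * u ^+ r2))
     + a2 * conjR m ('X^k * (v1 * u ^+ r1) + 0 * u ^+ r2)) %% M)`_0 = 0) ->
 (forall k, (k < m)%N -> ((a1 * conjR m (0 * u ^+ r1 + 'X^k * (v2 * u ^+ r2))
     + a2 * conjR m (0 * (v1 * u ^+ r1) + 'X^k * u ^+ r2)) %% M)`_0 = 0) ->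
 exists c1 c2 : {poly F},
   psi a1 = psi (c1 * u ^+ (m - r1) + c2 * (- conjR m v1 * u ^+ (m - r2))) /\
   psi a2 = psi (c1 * (- conjR m v2 * u ^+ (m - r1)) + c2 * u ^+ (m - r2)).
Proof.
move=> h1 h2.
have E1 : psi (a1 * conjR m (u ^+ r1) + a2 * conjR m (v1 * u ^+ r1)) = 0.
  rewrite -psi_mod nondeg ?rmorph0 // => k km; apply: (eq_trans _ (h1 k km)); apply: (congr1 (fun p : {poly F} => p`_0)).
  apply/psi_eq; rewrite !mul0r !addr0; set w := u; clearbody w.
  rewrite !(rmorphD, rmorphM, rmorphN, rmorphXn, cjE, cjD, cjM, cjXn, cjN, cjX).
  by rewrite -exprM; ring.
have E2 : psi (a1 * conjR m (v2 * u ^+ r2) + a2 * conjR m (u ^+ r2)) = 0.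
  rewrite -psi_mod nondeg ?rmorph0 // => k km; apply: (eq_trans _ (h2 k km)); apply: (congr1 (fun p : {poly F} => p`_0)).
  apply/psi_eq; rewrite !mul0r !add0r; set w := u; clearbody w.
  rewrite !(rmorphD, rmorphM, rmorphN, rmorphXn, cjE, cjD, cjM, cjXn, cjN, cjX).
  by rewrite -exprM; ring.
have [c1 hc1] : exists c1 : {poly F}, psi (a1 + a2 * conjR m v1) = psi c1 * U ^+ (m - r1).
  apply: divU; first lia.
  apply: cu_cancel; rewrite -E1 !(rmorphD, rmorphM, cjE, cjM, cjXn); ring.
have [c2 hc2] : exists c2 : {poly F}, psi (a1 * conjR m v2 + a2) = psi c2 * U ^+ (m - r2).
  apply: divU; first lia.
  apply: cu_cancel; rewrite -E2 !(rmorphD, rmorphM, cjE, cjM, cjXn); ring.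
have [s hs] := inv_cj.
exists (s * c1), (s * c2).
move: hc1 hc2; set w := u; clearbody w.
rewrite !(rmorphD, rmorphM, cjE) => hc1 hc2.
have [e1 e2] := alg_inv hs hc1 hc2.
rewrite e1 e2 !(rmorphD, rmorphM, rmorphN, rmorphXn, cjE); split; ring.
Qed.


Lemma DtoC (c1 c2 : {poly F}) : exists s1 s2 : {poly F},
  psi (c1 * u ^+ (m - r1) + c2 * (- conjR m v1 * u ^+ (m - r2)))
    = psi (s1 * u ^+ r1 + s2 * (v2 * u ^+ r2)) /\
  psi (c1 * (- conjR m v2 * u ^+ (m - r1)) + c2 * u ^+ (m - r2))
    = psi (s1 * (v1 * u ^+ r1) + s2 * u ^+ r2).
Proof.
have [y hy] := inv_psi.
have [n0 hn0] : exists n0, n0 = (m - r2 - r2)%N by eexists.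
have [d hd] : exists d, d = (r2 - r1)%N by eexists.
have [al hal] : exists al : {poly F},
  al = c1 * u ^+ (n0 + d + d) - c2 * conjR m v1 * u ^+ (n0 + d) by eexists.
have [ga hga] : exists ga : {poly F}, ga = - c1 * (conjR m v2 + v1) * u ^+ (n0 + d)
  + c2 * (1 + conjR m v1 * v1) * u ^+ n0 by eexists.
have [be hbe] : exists be : {poly F}, be = y * ga by eexists.
have hB : psi be * (1 - psi v1 * psi v2) = psi ga.
  by rewrite hbe rmorphM mulrAC hy mul1r.
exists (al - be * v2 * u ^+ d), be.
have e1 : (m - r1 = n0 + r1 + d + d)%N by lia.
have e2 : (m - r2 = n0 + r1 + d)%N by lia.
have e3 : r2 = (r1 + d)%N by lia.
rewrite e1 e2 e3.
move: hal hga; set w := u; clearbody w => hal hga.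
split.
  rewrite !(rmorphD, rmorphB, rmorphM, rmorphN, rmorphXn, cjE) hal.
  rewrite !(rmorphD, rmorphB, rmorphM, rmorphN, rmorphXn, cjE) !exprD; ring.
rewrite !(rmorphD, rmorphB, rmorphM, rmorphN, rmorphXn, cjE) !exprD.
transitivity (psi al * psi v1 * psi w ^+ r1
  + (psi be * (1 - psi v1 * psi v2)) * (psi w ^+ r1 * psi w ^+ d)); last by ring.
rewrite hB hal hga.
rewrite !(rmorphD, rmorphB, rmorphM, rmorphN, rmorphXn, cjE, rmorph1) !exprD; ring.
Qed.


Lemma main_sec :
  let C := qc_code (m := m) (u ^+ r1) (v1 * u ^+ r1) (v2 * u ^+ r2) (u ^+ r2) in
  let D := qc_code (m := m) (u ^+ (m - r1)) (- conjR m v2 * u ^+ (m - r1))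
                            (- conjR m v1 * u ^+ (m - r2)) (u ^+ (m - r2)) in
  (forall w, eucl_dual C w <-> D w) /\ (forall w, eucl_dual C w -> C w).
Proof.
move=> C D.
have DC : forall w, D w -> eucl_dual C w.
  move=> w [c1 [c2 ->]] c [s1 [s2 ->]].
  by rewrite ipvec modE DtoDual /= coef0.
have CD : forall w, eucl_dual C w -> D w.
  move=> w hw.
  have hw' : forall c, C c -> eucl_ip (row_mx (vecR m (rVpoly (lsubmx w)))
                                         (vecR m (rVpoly (rsubmx w)))) c = 0.
    by rewrite !vecR_rV hsubmxK.
  have [c1 [c2 [e1 e2]]] := DualtoD (a1 := rVpoly (lsubmx w)) (a2 := rVpoly (rsubmx w))
    (fun k km => ltac:(rewrite -ipvec; apply: hw'; by exists 'X^k, 0))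
    (fun k km => ltac:(rewrite -ipvec; apply: hw'; by exists 0, 'X^k)).
  exists c1, c2.
  rewrite -(hsubmxK w) -(vecR_rV (lsubmx w)) -(vecR_rV (rsubmx w)).
  by rewrite (vecR_psi e1) (vecR_psi e2).
have DCC : forall w, D w -> C w.
  move=> w [c1 [c2 ->]]; have [s1 [s2 [e1 e2]]] := DtoC c1 c2.
  by exists s1, s2; rewrite (vecR_psi e1) (vecR_psi e2).
split; first by move=> w; split; [exact: CD | exact: DC].
by move=> w /CD; exact: DCC.
Qed.

End Aux.

Theorem mainTheorem14 (F : finFieldType) (p t : nat) (v1 v2 : {poly F})
    (r1 r2 : nat) :
  prime p -> p \in [pchar F] -> (1 <= t)%N ->
  coprimep (v1 * v2 - 1) ('X^(p ^ t) - 1) ->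
  (0 < r1)%N -> (r1 < r2)%N -> (2 * r2 < p ^ t - 1)%N ->
  let m := (p ^ t)%N in
  let C := qc_code (m := m) (('X - 1) ^+ r1) (v1 * ('X - 1) ^+ r1)
                            (v2 * ('X - 1) ^+ r2) (('X - 1) ^+ r2) in
  let D := qc_code (m := m) (('X - 1) ^+ (m - r1))
                            (- conjR m v2 * ('X - 1) ^+ (m - r1))
                            (- conjR m v1 * ('X - 1) ^+ (m - r2))
                            (('X - 1) ^+ (m - r2)) in
  (forall w, eucl_dual C w <-> D w) /\ (forall w, eucl_dual C w -> C w).
Proof.
move=> hp hpc ht hcop hr1 hr12 hr2 m C D.
have hm : (1 < m)%N.
  rewrite /m; case: t ht {hr2 hcop m C D} => // t _.
  by rewrite (leq_trans (prime_gt1 hp)) // expnS leq_pmulr // expn_gt0 prime_gt0.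
have hN : [pchar {poly F}].-nat m by rewrite pnatX pnatE // pchar_poly hpc.
have hu : ('X - 1 : {poly F}) ^+ m = modR F m.
  rewrite /modR exprDn_pchar //; congr (_ + _).
  have := exprDn_pchar (-1 : {poly F}) 1 hN.
  rewrite addNr expr0n expr1n (gtn_eqF (ltnW hm)) /= => /esym/eqP.
  by rewrite addr_eq0 => /eqP.
exact: (main_sec hm hu hcop hr1 hr12 hr2).
Qed.
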